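(* Let $\mathbb{C}$ be a pointed protomodular category and let $m:S\to X$ be a normal monomorphism in $\mathbb{C}$ such that the generic split extension with kernel $S$ exists in $\mathbb{C}$ and the generic split extension with kernel $(S,X,m)$ exists in the arrow category $\mathbb{C}^{\mathbf{2}}$. If $m$ has trivial centralizer, then $q_1:[S,X,m]\to[S]$ is a monomorphism.
   Context: $\mathbb{C}$ is pointed with finite limits. A split extension is a diagram $X\xrightarrow{\kappa}A\underset{\beta}{\overset{\alpha}{\rightleftarrows}}B$ with $\alpha\beta=1_B$ and $\kappa$ a kernel of $\alpha$; morphisms of split extensions are triples of morphisms commuting with the structure. $\mathbb{C}$ is protomodular if the split short five lemma holds (if the outer components of a morphism of split extensions are isomorphisms, so is the middle one). A generic split extension with kernel $X$, written $X\xrightarrow{k}[X]\ltimes X\underset{i}{\overset{p_1}{\rightleftarrows}}[X]$, is a terminal object in the category of split extensions with kernel $X$ and morphisms whose kernel component is $1_X$. $\mathbb{C}^{\mathbf 2}$ is the category whose objects are morphisms $f:X\to Z$ of $\mathbb{C}$ and whose morphisms are commutative squares; split extensions and generic split extensions in $\mathbb{C}^{\mathbf 2}$ are defined in the same way (it is pointed with finite limits computed componentwise). A generic split extension with kernel $(S,X,m)$ (the object $m:S\to X$) in $\mathbb{C}^{\mathbf 2}$ consists of a split extension $S\to[S,X,m]\ltimes S\rightleftarrows[S,X,m]$ in $\mathbb{C}$, the generic split extension with kernel $X$ in $\mathbb{C}$ (its codomain row), and vertical morphisms $m$, $q_2\ltimes m$, $q_2:[S,X,m]\to[X]$ forming a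 morphism of split extensions. $q_1:[S,X,m]\to[S]$ is the unique morphism (codomain component) of the unique morphism from the split extension $S\to[S,X,m]\ltimes S\rightleftarrows[S,X,m]$ into the generic split extension with kernel $S$. A normal monomorphism is a kernel of some morphism. Morphisms $f:A\to X$, $g:B\to X$ commute if some $\varphi:A\times B\to X$ has $\varphi\langle1,0\rangle=f$, $\varphi\langle0,1\rangle=g$; the centralizer $Z_X(A,f)\to X$ of $f$ is the terminal object among morphisms into $X$ commuting with $f$; $f$ has trivial centralizer if $Z_X(A,f)=0$. *)

(* Defs.v *)
From Stdlib Require Import ProofIrrelevance.
Set Implicit Arguments.
Unset Strict Implicit.

Record Cat := {
  ob :> Type;
  hom : ob -> ob -> Type;
  cmp : forall a b c : ob, hom b c -> hom a b -> hom a c;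
  idm : forall a : ob, hom a a;
  cmp_assoc : forall a b c d (h : hom c d) (g : hom b c) (f : hom a b),
      cmp h (cmp g f) = cmp (cmp h g) f;
  cmp_id_l : forall a b (f : hom a b), cmp (idm b) f = f;
  cmp_id_r : forall a b (f : hom a b), cmp f (idm a) = f }.
Arguments hom {_} _ _.
Arguments cmp {_ _ _ _} _ _.
Arguments idm {_} _.
Notation "g ∘ f" := (cmp g f) (at level 40, left associativity).

Record ZeroObj (C : Cat) := {
  zo : ob C;
  to_z : forall a : ob C, hom a zo;
  from_z : forall a : ob C, hom zo a;
  to_z_uniq : forall a (f : hom a zo), f = to_z a;
  from_z_uniq : forall a (f : hom zo a), f = from_z a }.

Arguments zo {C} _.
Arguments to_z {C} _ _.
Arguments from_z {C} _ _.
Arguments to_z_uniq {C} _ _ _.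
Arguments from_z_uniq {C} _ _ _.

Record PCat := { pc :> Cat; pzero : ZeroObj pc }.

Definition zero {C : PCat} (a b : C) : hom a b :=
  from_z (pzero C) b ∘ to_z (pzero C) a.

Definition is_mono {C : Cat} {a b : C} (m : hom a b) : Prop :=
  forall (c : C) (g h : hom c a), m ∘ g = m ∘ h -> g = h.

Definition is_iso {C : Cat} {a b : C} (f : hom a b) : Prop :=
  exists g : hom b a, g ∘ f = idm a /\ f ∘ g = idm b.

Definition is_pullback {C : Cat} {a b c p : C} (f : hom a c) (g : hom b c)
  (pa : hom p a) (pb : hom p b) : Prop :=
  f ∘ pa = g ∘ pb /\
  forall (q : C) (qa : hom q a) (qb : hom q b), f ∘ qa = g ∘ qb ->
    exists u : hom q p, (pa ∘ u = qa /\ pb ∘ u = qb) /\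
      forall u' : hom q p, pa ∘ u' = qa -> pb ∘ u' = qb -> u' = u.

Definition has_pullbacks (C : Cat) : Prop :=
  forall (a b c : C) (f : hom a c) (g : hom b c),
    exists (p : C) (pa : hom p a) (pb : hom p b), is_pullback f g pa pb.

Definition has_terminal (C : Cat) : Prop :=
  exists t : C, forall a : C, exists f : hom a t, forall g : hom a t, g = f.

Definition has_finite_limits (C : Cat) : Prop := has_terminal C /\ has_pullbacks C.

Definition is_product {C : Cat} {a b p : C} (p1 : hom p a) (p2 : hom p b) : Prop :=
  forall (q : C) (f : hom q a) (g : hom q b),
    exists u : hom q p, (p1 ∘ u = f /\ p2 ∘ u = g) /\
      forall u' : hom q p, p1 ∘ u' = f -> p2 ∘ u' = g -> u' = u.

Definition is_kernel {C : PCat} {k a b : C} (kap : hom k a) (f : hom a b) : Prop :=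
  f ∘ kap = zero k b /\
  forall (q : C) (h : hom q a), f ∘ h = zero q b ->
    exists u : hom q k, kap ∘ u = h /\ forall u' : hom q k, kap ∘ u' = h -> u' = u.

Definition is_normal_mono {C : PCat} {s x : C} (m : hom s x) : Prop :=
  exists (y : C) (f : hom x y), is_kernel m f.

Record SplitExt (C : PCat) (X : C) := {
  se_A : C;
  se_B : C;
  se_k : hom X se_A;
  se_a : hom se_A se_B;
  se_b : hom se_B se_A;
  se_ab : se_a ∘ se_b = idm se_B;
  se_ker : is_kernel se_k se_a }.
Arguments SplitExt : clear implicits.
Arguments se_A {C X} _.
Arguments se_B {C X} _.
Arguments se_k {C X} _.
Arguments se_a {C X} _.
Arguments se_b {C X} _.

Definition se_morph_raw {C : Cat} {X A B X' A' B' : C}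
  (k : hom X A) (a : hom A B) (b : hom B A)
  (k' : hom X' A') (a' : hom A' B') (b' : hom B' A')
  (u : hom X X') (f : hom A A') (g : hom B B') : Prop :=
  f ∘ k = k' ∘ u /\ a' ∘ f = g ∘ a /\ f ∘ b = b' ∘ g.

Definition is_se_morph {C : PCat} {X X' : C} (E : SplitExt C X) (E' : SplitExt C X')
  (u : hom X X') (f : hom (se_A E) (se_A E')) (g : hom (se_B E) (se_B E')) : Prop :=
  se_morph_raw (se_k E) (se_a E) (se_b E) (se_k E') (se_a E') (se_b E') u f g.

Arguments is_se_morph {C X X'} E E' u f g.

Definition is_generic {C : PCat} {X : C} (G : SplitExt C X) : Prop :=
  forall E : SplitExt C X,
    exists (f : hom (se_A E) (se_A G)) (g : hom (se_B E) (se_B G)),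
      is_se_morph E G (idm X) f g /\
      forall f' g', is_se_morph E G (idm X) f' g' -> f' = f /\ g' = g.

(** Protomodularity: the split short five lemma *)
Definition is_protomodular (C : PCat) : Prop :=
  forall (X X' : C) (E : SplitExt C X) (E' : SplitExt C X') u f g,
    is_se_morph E E' u f g -> is_iso u -> is_iso g -> is_iso f.

Definition commute {C : PCat} {a b x : C} (f : hom a x) (g : hom b x) : Prop :=
  exists (p : C) (p1 : hom p a) (p2 : hom p b) (i1 : hom a p) (i2 : hom b p)
         (phi : hom p x),
    is_product p1 p2 /\
    p1 ∘ i1 = idm a /\ p2 ∘ i1 = zero a b /\
    p1 ∘ i2 = zero b a /\ p2 ∘ i2 = idm b /\
    phi ∘ i1 = f /\ phi ∘ i2 = g.

Definition is_centralizer {C : PCat} {a x z : C} (f : hom a x) (c : hom z x) : Prop :=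
  commute f c /\
  forall (b : C) (g : hom b x), commute f g ->
    exists u : hom b z, c ∘ u = g /\ forall u' : hom b z, c ∘ u' = g -> u' = u.

Definition trivial_centralizer {C : PCat} {a x : C} (f : hom a x) : Prop :=
  exists (z : C) (c : hom z x), is_centralizer f c /\ idm z = zero z z.

Record arr (C : Cat) := { adom : C; acod : C; amap : hom adom acod }.
Arguments adom {C} _.
Arguments acod {C} _.
Arguments amap {C} _.

Record ahom (C : Cat) (x y : arr C) := {
  h0 : hom (adom x) (adom y);
  h1 : hom (acod x) (acod y);
  hsq : h1 ∘ amap x = amap y ∘ h0 }.
Arguments h0 {C x y} _.
Arguments h1 {C x y} _.

Lemma ahom_eq (C : Cat) (x y : arr C) (f g : ahom x y) :
  h0 f = h0 g -> h1 f = h1 g -> f = g.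
Proof.
  destruct f as [f0 f1 fs], g as [g0 g1 gs]; simpl; intros -> ->.
  f_equal; apply proof_irrelevance.
Qed.

Lemma acmp_sq (C : Cat) (x y z : arr C) (g : ahom y z) (f : ahom x y) :
  (h1 g ∘ h1 f) ∘ amap x = amap z ∘ (h0 g ∘ h0 f).
Proof.
  rewrite <- cmp_assoc, (hsq f), cmp_assoc, (hsq g), cmp_assoc; reflexivity.
Qed.

Definition acmp (C : Cat) (x y z : arr C) (g : ahom y z) (f : ahom x y) : ahom x z :=
  {| h0 := h0 g ∘ h0 f; h1 := h1 g ∘ h1 f; hsq := acmp_sq g f |}.

Lemma aid_sq (C : Cat) (x : arr C) : idm (acod x) ∘ amap x = amap x ∘ idm (adom x).
Proof. rewrite cmp_id_l, cmp_id_r; reflexivity. Qed.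

Definition aid (C : Cat) (x : arr C) : ahom x x :=
  {| h0 := idm _; h1 := idm _; hsq := aid_sq x |}.

Lemma acmp_assoc (C : Cat) (a b c d : arr C) (h : ahom c d) (g : ahom b c) (f : ahom a b) :
  acmp h (acmp g f) = acmp (acmp h g) f.
Proof. apply ahom_eq; simpl; apply cmp_assoc. Qed.

Lemma acmp_id_l (C : Cat) (a b : arr C) (f : ahom a b) : acmp (aid b) f = f.
Proof. apply ahom_eq; simpl; apply cmp_id_l. Qed.

Lemma acmp_id_r (C : Cat) (a b : arr C) (f : ahom a b) : acmp f (aid a) = f.
Proof. apply ahom_eq; simpl; apply cmp_id_r. Qed.

Definition ArrowCat (C : Cat) : Cat :=
  {| ob := arr C; hom := @ahom C; cmp := @acmp C; idm := @aid C;
     cmp_assoc := @acmp_assoc C; cmp_id_l := @acmp_id_l C; cmp_id_r := @acmp_id_r C |}.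

Section ArrowZero.
Local Definition azo (C : Cat) (Z : ZeroObj C) : arr C :=
  {| adom := zo Z; acod := zo Z; amap := idm (zo Z) |}.

Local Lemma ato_sq (C : Cat) (Z : ZeroObj C) (a : arr C) :
  to_z Z (acod a) ∘ amap a = amap (azo Z) ∘ to_z Z (adom a).
Proof.
  transitivity (to_z Z (adom a)); [apply to_z_uniq | symmetry; apply to_z_uniq].
Qed.

Local Lemma afrom_sq (C : Cat) (Z : ZeroObj C) (a : arr C) :
  from_z Z (acod a) ∘ amap (azo Z) = amap a ∘ from_z Z (adom a).
Proof.
  transitivity (from_z Z (acod a)); [apply from_z_uniq | symmetry; apply from_z_uniq].
Qed.

Local Definition ato (C : Cat) (Z : ZeroObj C) (a : arr C) : ahom a (azo Z) :=
  @Build_ahom C a (azo Z) (to_z Z (adom a)) (to_z Z (acod a)) (ato_sq Z a).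
Local Definition afrom (C : Cat) (Z : ZeroObj C) (a : arr C) : ahom (azo Z) a :=
  @Build_ahom C (azo Z) a (from_z Z (adom a)) (from_z Z (acod a)) (afrom_sq Z a).

Local Lemma ato_uniq (C : Cat) (Z : ZeroObj C) (a : arr C) (f : ahom a (azo Z)) :
  f = ato Z a.
Proof. apply ahom_eq; apply to_z_uniq. Qed.
Local Lemma afrom_uniq (C : Cat) (Z : ZeroObj C) (a : arr C) (f : ahom (azo Z) a) :
  f = afrom Z a.
Proof. apply ahom_eq; apply from_z_uniq. Qed.

Definition arrow_zero (C : Cat) (Z : ZeroObj C) : ZeroObj (ArrowCat C) :=
  @Build_ZeroObj (ArrowCat C) (azo Z : ob (ArrowCat C)) (@ato C Z) (@afrom C Z)
    (@ato_uniq C Z) (@afrom_uniq C Z).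
End ArrowZero.

Definition ArrowPCat (C : PCat) : PCat :=
  {| pc := ArrowCat C; pzero := arrow_zero (pzero C) |}.

Definition arr_of {C : Cat} {s x : C} (m : hom s x) : arr C :=
  {| adom := s; acod := x; amap := m |}.

(* Main.v *)
Require Import Defs.
From Stdlib Require Import ProofIrrelevance.

Ltac ra := repeat rewrite <- cmp_assoc.
Ltac la := repeat rewrite cmp_assoc.

Section Basics.
Context {C : PCat}.

Lemma from_z_eq {a : C} (f g : hom (zo (pzero C)) a) : f = g.
Proof. rewrite (from_z_uniq (pzero C) a f), (from_z_uniq (pzero C) a g); reflexivity. Qed.

Lemma to_z_eq {a : C} (f g : hom a (zo (pzero C))) : f = g.
Proof. rewrite (to_z_uniq (pzero C) a f), (to_z_uniq (pzero C) a g); reflexivity. Qed.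

Lemma zero_l {a b c : C} (f : hom a b) : zero b c ∘ f = zero a c.
Proof. unfold zero. rewrite <- cmp_assoc. f_equal. apply to_z_eq. Qed.

Lemma zero_r {a b c : C} (f : hom b c) : f ∘ zero a b = zero a c.
Proof. unfold zero. rewrite cmp_assoc. f_equal. apply from_z_eq. Qed.

Lemma zero_from {a b : C} (f : hom (zo (pzero C)) b) : f ∘ to_z (pzero C) a = zero a b.
Proof. unfold zero. f_equal. apply from_z_eq. Qed.

Lemma kernel_mono {k a b : C} {kap : hom k a} {f : hom a b} : is_kernel kap f -> is_mono kap.
Proof.
  intros [H0 H1] c g h E.
  assert (Hf : f ∘ (kap ∘ g) = zero c b) by (rewrite cmp_assoc, H0; apply zero_l).
  destruct (H1 c (kap ∘ g) Hf) as [u [Hu Hu']].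
  rewrite (Hu' g eq_refl), (Hu' h (eq_sym E)); reflexivity.
Qed.

Lemma kernel_factor {k a b q : C} {kap : hom k a} {f : hom a b} {h : hom q a} :
  is_kernel kap f -> f ∘ h = zero q b -> exists u, kap ∘ u = h.
Proof. intros [_ H1] E. destruct (H1 q h E) as [u [Hu _]]. eauto. Qed.

Lemma kernel_zero {k a b : C} {kap : hom k a} {f : hom a b} : is_kernel kap f -> f ∘ kap = zero k b.
Proof. intros [H _]; exact H. Qed.

Lemma pb_eq {a b c p q : C} {f : hom a c} {g : hom b c} {pa : hom p a} {pb : hom p b}
  {x y : hom q p} : is_pullback f g pa pb -> pa ∘ x = pa ∘ y -> pb ∘ x = pb ∘ y -> x = y.
Proof.
  intros [E H] E1 E2.
  assert (Hq : f ∘ (pa ∘ x) = g ∘ (pb ∘ x)) by (la; rewrite E; reflexivity).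
  destruct (H q _ _ Hq) as [u [_ Hu]].
  rewrite (Hu x eq_refl eq_refl), (Hu y (eq_sym E1) (eq_sym E2)); reflexivity.
Qed.

Lemma pb_lift {a b c p q : C} {f : hom a c} {g : hom b c} {pa : hom p a} {pb : hom p b}
  {x : hom q a} {y : hom q b} : is_pullback f g pa pb -> f ∘ x = g ∘ y ->
  exists u, pa ∘ u = x /\ pb ∘ u = y.
Proof. intros [_ H] E. destruct (H q x y E) as [u [[H1 H2] _]]. eauto. Qed.

Lemma prod_eq {a b p q : C} {p1 : hom p a} {p2 : hom p b} {x y : hom q p} :
  is_product p1 p2 -> p1 ∘ x = p1 ∘ y -> p2 ∘ x = p2 ∘ y -> x = y.
Proof.
  intros H E1 E2. destruct (H q (p1 ∘ x) (p2 ∘ x)) as [u [_ Hu]].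
  rewrite (Hu x eq_refl eq_refl), (Hu y (eq_sym E1) (eq_sym E2)); reflexivity.
Qed.

Lemma prod_pair {a b p q : C} {p1 : hom p a} {p2 : hom p b} (x : hom q a) (y : hom q b) :
  is_product p1 p2 -> exists u, p1 ∘ u = x /\ p2 ∘ u = y.
Proof. intros H. destruct (H q x y) as [u [[H1 H2] _]]. eauto. Qed.

Lemma prod_of_pb {a b p : C} {p1 : hom p a} {p2 : hom p b} :
  is_pullback (to_z (pzero C) a) (to_z (pzero C) b) p1 p2 -> is_product p1 p2.
Proof.
  intros [E H] q f g. destruct (H q f g (to_z_eq _ _)) as [u [Hu Hu']]. eauto.
Qed.

Lemma has_products : has_pullbacks C -> forall a b : C,
  exists (p : C) (p1 : hom p a) (p2 : hom p b), is_product p1 p2.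
Proof.
  intros HP a b. destruct (HP _ _ _ (to_z (pzero C) a) (to_z (pzero C) b)) as [p [p1 [p2 H]]].
  exists p, p1, p2. apply prod_of_pb; exact H.
Qed.

End Basics.

Section Proto.
Context {C : PCat} (HP : is_protomodular C) (HL : has_pullbacks C).

Lemma iso_id (a : C) : is_iso (idm a).
Proof. exists (idm a). rewrite cmp_id_l. auto. Qed.

Lemma mono_factor_iso (X : C) (E : SplitExt C X) (J : C) (j : hom J (se_A E))
  (k' : hom X J) (b' : hom (se_B E) J) :
  is_mono j -> j ∘ k' = se_k E -> j ∘ b' = se_b E -> is_iso j.
Proof.
  intros Hm Hk Hb.
  assert (Hab : (se_a E ∘ j) ∘ b' = idm (se_B E)).
  { rewrite <- cmp_assoc, Hb. apply se_ab. }
  assert (Hker : is_kernel k' (se_a E ∘ j)).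
  { destruct (se_ker E) as [Z0 U]. split.
    - rewrite <- cmp_assoc, Hk. exact Z0.
    - intros q h Hh. rewrite <- cmp_assoc in Hh.
      destruct (U q (j ∘ h) Hh) as [w [Hw Hw']].
      exists w. split.
      + apply Hm. rewrite cmp_assoc, Hk. exact Hw.
      + intros u' Hu'. apply Hw'. rewrite <- Hk, <- cmp_assoc, Hu'. reflexivity. }
  set (E' := {| se_A := J; se_B := se_B E; se_k := k'; se_a := se_a E ∘ j; se_b := b';
               se_ab := Hab; se_ker := Hker |}).
  apply (HP X X E' E (idm X) j (idm (se_B E))).
  - unfold is_se_morph, se_morph_raw; simpl. rewrite !cmp_id_r, cmp_id_l. auto.
  - apply iso_id.
  - apply iso_id.
Qed.

Lemma jointly_epic (X : C) (E : SplitExt C X) (W : C) (u v : hom (se_A E) W) :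
  u ∘ se_k E = v ∘ se_k E -> u ∘ se_b E = v ∘ se_b E -> u = v.
Proof.
  intros Hk Hb.
  destruct (has_products HL (se_A E) W) as [P [p1 [p2 HPr]]].
  destruct (prod_pair (idm _) u HPr) as [pu [Hpu1 Hpu2]].
  destruct (prod_pair (idm _) v HPr) as [pv [Hpv1 Hpv2]].
  destruct (HL _ _ _ pu pv) as [Q [e1 [e2 Hpb]]].
  assert (Hee : e1 = e2).
  { destruct Hpb as [E0 _].
    assert (H1 : p1 ∘ (pu ∘ e1) = p1 ∘ (pv ∘ e2)) by (rewrite E0; reflexivity).
    rewrite !cmp_assoc, Hpu1, Hpv1, !cmp_id_l in H1. exact H1. }
  subst e2.
  assert (Huv : u ∘ e1 = v ∘ e1).
  { destruct Hpb as [E0 _].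
    assert (H1 : p2 ∘ (pu ∘ e1) = p2 ∘ (pv ∘ e1)) by (rewrite E0; reflexivity).
    rewrite !cmp_assoc, Hpu2, Hpv2 in H1. exact H1. }
  assert (Hm : is_mono e1).
  { intros c x y Hxy. apply (pb_eq Hpb); assumption. }
  assert (Hfk : pu ∘ se_k E = pv ∘ se_k E).
  { apply (prod_eq HPr); rewrite !cmp_assoc; [rewrite Hpu1, Hpv1 | rewrite Hpu2, Hpv2]; auto. }
  assert (Hfb : pu ∘ se_b E = pv ∘ se_b E).
  { apply (prod_eq HPr); rewrite !cmp_assoc; [rewrite Hpu1, Hpv1 | rewrite Hpu2, Hpv2]; auto. }
  destruct (pb_lift Hpb Hfk) as [k' [Hk' _]].
  destruct (pb_lift Hpb Hfb) as [b' [Hb' _]].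
  destruct (mono_factor_iso _ E _ e1 k' b' Hm Hk' Hb') as [ei [Hei1 Hei2]].
  rewrite <- (cmp_id_r u), <- (cmp_id_r v), <- Hei2, !cmp_assoc, Huv. reflexivity.
Qed.

Lemma mono_of_trivial_kernel (A B : C) (f : hom A B) :
  (forall (Q : C) (w : hom Q A), f ∘ w = zero Q B -> w = zero Q A) -> is_mono f.
Proof.
  intros Hk.
  destruct (HL _ _ _ f f) as [R [p1 [p2 Hpb]]].
  destruct (pb_lift Hpb (x := idm A) (y := idm A) eq_refl) as [d [Hd1 Hd2]].
  set (O := zo (pzero C)).
  assert (Hab1 : p1 ∘ d = idm A) by exact Hd1.
  assert (Hker1 : is_kernel (from_z (pzero C) R) p1).
  { split.
    - unfold zero. apply from_z_eq.
    - intros q h Hh. exists (to_z (pzero C) q). split.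
      + assert (E2 : f ∘ (p2 ∘ h) = zero q B).
        { destruct Hpb as [E0 _]. rewrite cmp_assoc, <- E0, <- cmp_assoc, Hh. apply zero_r. }
        apply Hk in E2.
        rewrite zero_from. apply (pb_eq Hpb).
        * rewrite zero_r, Hh. reflexivity.
        * rewrite zero_r, E2. reflexivity.
      + intros u' _. apply to_z_eq. }
  assert (Hab2 : idm A ∘ idm A = idm A) by apply cmp_id_l.
  assert (Hker2 : is_kernel (from_z (pzero C) A) (idm A)).
  { split.
    - unfold zero. apply from_z_eq.
    - intros q h Hh. exists (to_z (pzero C) q). rewrite cmp_id_l in Hh. split.
      + rewrite zero_from, Hh. reflexivity.
      + intros u' _. apply to_z_eq. }
  set (E1 := {| se_A := R; se_B := A; se_k := from_z (pzero C) R; se_a := p1; se_b := d;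
               se_ab := Hab1; se_ker := Hker1 |}).
  set (E2 := {| se_A := A; se_B := A; se_k := from_z (pzero C) A; se_a := idm A; se_b := idm A;
               se_ab := Hab2; se_ker := Hker2 |}).
  assert (Hiso : is_iso d).
  { apply (HP _ _ E2 E1 (idm O) d (idm A)).
    - unfold is_se_morph, se_morph_raw; simpl. split; [apply from_z_eq|].
      rewrite Hd1, !cmp_id_l, !cmp_id_r. auto.
    - apply iso_id.
    - apply iso_id. }
  destruct Hiso as [e [He1 He2]].
  assert (Hp1 : p1 = e) by (rewrite <- (cmp_id_r p1), <- He2, cmp_assoc, Hd1, cmp_id_l; reflexivity).
  assert (Hp2 : p2 = e) by (rewrite <- (cmp_id_r p2), <- He2, cmp_assoc, Hd2, cmp_id_l; reflexivity).
  intros c g h Hgh. destruct (pb_lift Hpb Hgh) as [x [Hx1 Hx2]].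
  rewrite <- Hx1, <- Hx2, Hp1, Hp2. reflexivity.
Qed.

End Proto.

Section Arrow.
Context {C : PCat}.
Notation C2 := (ArrowPCat C).

Lemma h0_zero (x y : C2) : h0 (@zero C2 x y) = zero (adom x) (adom y).
Proof. reflexivity. Qed.
Lemma h1_zero (x y : C2) : h1 (@zero C2 x y) = zero (acod x) (acod y).
Proof. reflexivity. Qed.
Lemma h0_cmp (x y z : C2) (g : @hom C2 y z) (f : @hom C2 x y) : h0 (g ∘ f) = h0 g ∘ h0 f.
Proof. reflexivity. Qed.
Lemma h1_cmp (x y z : C2) (g : @hom C2 y z) (f : @hom C2 x y) : h1 (g ∘ f) = h1 g ∘ h1 f.
Proof. reflexivity. Qed.
Lemma h0_id (x : C2) : h0 (idm x) = idm (adom x).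
Proof. reflexivity. Qed.
Lemma h1_id (x : C2) : h1 (idm x) = idm (acod x).
Proof. reflexivity. Qed.

Lemma ahom_eq2 (x y : C2) (f g : @hom C2 x y) : h0 f = h0 g -> h1 f = h1 g -> f = g.
Proof. apply ahom_eq. Qed.

Lemma hsq2 (x y : C2) (f : @hom C2 x y) : h1 f ∘ amap x = amap y ∘ h0 f.
Proof. apply hsq. Qed.

Lemma kernel2_of_components (M A2 B2 : C2) (kk : @hom C2 M A2) (aa : @hom C2 A2 B2) :
  is_kernel (h0 kk) (h0 aa) -> is_kernel (h1 kk) (h1 aa) -> is_kernel kk aa.
Proof.
  intros [Z0 U0] [Z1 U1]. split.
  - apply ahom_eq2; [rewrite h0_cmp, Z0 | rewrite h1_cmp, Z1]; reflexivity.
  - intros Q h Hh.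
    assert (H0 : h0 aa ∘ h0 h = zero (adom Q) (adom B2)) by (rewrite <- h0_cmp, Hh; reflexivity).
    assert (H1 : h1 aa ∘ h1 h = zero (acod Q) (acod B2)) by (rewrite <- h1_cmp, Hh; reflexivity).
    destruct (U0 _ _ H0) as [u0 [Hu0 Hu0']].
    destruct (U1 _ _ H1) as [u1 [Hu1 Hu1']].
    assert (Hsq : u1 ∘ amap Q = amap M ∘ u0).
    { apply (kernel_mono (conj Z1 U1)).
      rewrite !cmp_assoc, Hu1, (hsq2 _ _ h), (hsq2 _ _ kk), <- Hu0, cmp_assoc. reflexivity. }
    exists (@Build_ahom C Q M u0 u1 Hsq). split.
    + apply ahom_eq2; simpl; assumption.
    + intros u' Hu'. apply ahom_eq2; simpl.
      * apply Hu0'. rewrite <- h0_cmp, Hu'. reflexivity.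
      * apply Hu1'. rewrite <- h1_cmp, Hu'. reflexivity.
Qed.

Lemma components_of_kernel2 (M A2 B2 : C2) (kk : @hom C2 M A2) (aa : @hom C2 A2 B2) :
  is_kernel kk aa -> is_kernel (h0 kk) (h0 aa) /\ is_kernel (h1 kk) (h1 aa).
Proof.
  intros [Z U].
  assert (Z0 : h0 aa ∘ h0 kk = zero (adom M) (adom B2)) by (rewrite <- h0_cmp, Z; reflexivity).
  assert (Z1 : h1 aa ∘ h1 kk = zero (acod M) (acod B2)) by (rewrite <- h1_cmp, Z; reflexivity).
  assert (K1 : is_kernel (h1 kk) (h1 aa)).
  { split; [exact Z1|]. intros q h Hh.
    set (Qa := arr_of (from_z (pzero C) q)).
    assert (Hsq : h ∘ amap Qa = amap A2 ∘ from_z (pzero C) (adom A2)) by apply from_z_eq.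
    set (hh := @Build_ahom C Qa A2 (from_z (pzero C) (adom A2)) h Hsq : @hom C2 Qa A2).
    assert (Hz : aa ∘ hh = @zero C2 Qa B2).
    { apply ahom_eq2; simpl; [apply from_z_eq | exact Hh]. }
    destruct (U Qa hh Hz) as [u [Hu Hu']].
    exists (h1 u). split.
    - change h with (h1 hh). rewrite <- Hu. reflexivity.
    - intros u' Hu''.
      assert (Hsq' : u' ∘ amap Qa = amap M ∘ from_z (pzero C) (adom M)) by apply from_z_eq.
      set (uu := @Build_ahom C Qa M (from_z (pzero C) (adom M)) u' Hsq' : @hom C2 Qa M).
      assert (Huu : kk ∘ uu = hh) by (apply ahom_eq2; simpl; [apply from_z_eq | exact Hu'']).
      rewrite <- (Hu' uu Huu). reflexivity. }
  split; [|exact K1].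
  split; [exact Z0|]. intros q h Hh.
  assert (Hh1 : h1 aa ∘ (amap A2 ∘ h) = zero q (acod B2)).
  { rewrite cmp_assoc, hsq2, <- cmp_assoc, Hh. apply zero_r. }
  destruct K1 as [_ UK1].
  destruct (UK1 q _ Hh1) as [v [Hv _]].
  set (Qa := arr_of v).
  assert (Hsq : h1 kk ∘ amap Qa = amap A2 ∘ h) by exact Hv.
  set (hh := @Build_ahom C Qa A2 h (h1 kk) Hsq : @hom C2 Qa A2).
  assert (Hz : aa ∘ hh = @zero C2 Qa B2).
  { apply ahom_eq2; simpl; [exact Hh | exact Z1]. }
  destruct (U Qa hh Hz) as [u [Hu Hu']].
  exists (h0 u). split.
  - change h with (h0 hh). rewrite <- Hu. reflexivity.
  - intros u' Hu''.
    assert (Hsq' : idm (acod M) ∘ amap Qa = amap M ∘ u').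
    { rewrite cmp_id_l. apply (kernel_mono (conj Z1 UK1)).
      simpl. rewrite Hv, cmp_assoc, hsq2, <- cmp_assoc, Hu''. reflexivity. }
    set (uu := @Build_ahom C Qa M u' (idm (acod M)) Hsq' : @hom C2 Qa M).
    assert (Huu : kk ∘ uu = hh) by (apply ahom_eq2; simpl; [exact Hu'' | apply cmp_id_r]).
    rewrite <- (Hu' uu Huu). reflexivity.
Qed.

End Arrow.

Ltac nz := cbn [acod adom amap arr_of] in *.
Ltac rw H := let h := fresh "rw" in pose proof H as h; cbn [acod adom amap arr_of] in h; cbn [acod adom amap arr_of]; rewrite h; clear h.
Ltac rwb H := let h := fresh "rw" in pose proof H as h; cbn [acod adom amap arr_of] in h; cbn [acod adom amap arr_of]; rewrite <- h; clear h.

Ltac c2 := rewrite ?h0_cmp, ?h1_cmp, ?h0_zero, ?h1_zero, ?h0_id, ?h1_id; cbn [h0 h1 acmp aid acod adom amap arr_of] in *.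

Section Main.
Context {C : PCat} (HL : has_pullbacks C) (HP : is_protomodular C)
  {S X : C} (m : hom S X) {Y : C} (pi : hom X Y) (Hm : is_kernel m pi)
  (GS : SplitExt C S) (HGS : is_generic GS)
  (GM : SplitExt (ArrowPCat C) (arr_of m)) (HGM : is_generic GM)
  (Hz : forall (W : C) (w : hom W X), commute m w -> w = zero W X).

Notation C2 := (ArrowPCat C).
Notation A0 := (adom (se_A GM)).
Notation A1 := (acod (se_A GM)).
Notation B0 := (adom (se_B GM)).
Notation B1 := (acod (se_B GM)).
Notation k0 := (h0 (se_k GM)).
Notation k1 := (h1 (se_k GM)).
Notation a0 := (h0 (se_a GM)).
Notation a1 := (h1 (se_a GM)).
Notation b0 := (h0 (se_b GM)).
Notation b1 := (h1 (se_b GM)).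
Notation muG := (amap (se_A GM)).
Notation q2 := (amap (se_B GM)).
Notation ZO := (zo (pzero C)).

Lemma GM_ker : is_kernel k0 a0 /\ is_kernel k1 a1.
Proof. apply components_of_kernel2. apply se_ker. Qed.

Lemma GM_ab0 : a0 ∘ b0 = idm B0.
Proof. exact (f_equal h0 (se_ab GM)). Qed.
Lemma GM_ab1 : a1 ∘ b1 = idm B1.
Proof. exact (f_equal h1 (se_ab GM)). Qed.

Definition E0 : SplitExt C S :=
  {| se_A := A0; se_B := B0; se_k := k0; se_a := a0; se_b := b0;
     se_ab := GM_ab0; se_ker := proj1 GM_ker |}.
Definition E1 : SplitExt C X :=
  {| se_A := A1; se_B := B1; se_k := k1; se_a := a1; se_b := b1;
     se_ab := GM_ab1; se_ker := proj2 GM_ker |}.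

Lemma m_mono : is_mono m.
Proof. exact (kernel_mono Hm). Qed.
Lemma k1_mono : is_mono k1.
Proof. exact (kernel_mono (proj2 GM_ker)). Qed.
Lemma k0_mono : is_mono k0.
Proof. exact (kernel_mono (proj1 GM_ker)). Qed.

Lemma kG_sq : k1 ∘ m = muG ∘ k0.
Proof. exact (hsq2 _ _ (se_k GM)). Qed.
Lemma aG_sq : a1 ∘ muG = q2 ∘ a0.
Proof. exact (hsq2 _ _ (se_a GM)). Qed.
Lemma bG_sq : b1 ∘ q2 = muG ∘ b0.
Proof. exact (hsq2 _ _ (se_b GM)). Qed.

Lemma base_unique (E : SplitExt C2 (arr_of m)) f g f' g' :
  is_se_morph E GM (idm _) f g -> is_se_morph E GM (idm _) f' g' -> g = g'.
Proof.
  intros H H'. destruct (HGM E) as [F [G [_ U]]].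
  destruct (U f g H) as [_ ->]. destruct (U f' g' H') as [_ ->]. reflexivity.
Qed.

Lemma triv_morph (E : SplitExt C2 (arr_of m)) (r0 : hom (adom (se_A E)) S)
  (r1 : hom (acod (se_A E)) X) :
  r0 ∘ h0 (se_k E) = idm S -> r0 ∘ h0 (se_b E) = zero _ _ ->
  r1 ∘ h1 (se_k E) = idm X -> r1 ∘ h1 (se_b E) = zero _ _ ->
  m ∘ r0 = r1 ∘ amap (se_A E) ->
  exists fA, is_se_morph E GM (idm _) fA (zero _ _).
Proof.
  intros H1 H2 H3 H4 H5.
  assert (Hsq : (k1 ∘ r1) ∘ amap (se_A E) = muG ∘ (k0 ∘ r0)).
  { nz. rewrite <- cmp_assoc, <- H5, cmp_assoc. rw kG_sq. rewrite cmp_assoc. reflexivity. }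
  exists (@Build_ahom C (se_A E) (se_A GM) (k0 ∘ r0) (k1 ∘ r1) Hsq).
  unfold is_se_morph, se_morph_raw. split; [|split].
  - apply ahom_eq2; c2; rewrite <- cmp_assoc; [rewrite H1 | rewrite H3]; reflexivity.
  - apply ahom_eq2; c2; rewrite cmp_assoc, zero_l;
      [rw (kernel_zero (proj1 GM_ker)) | rw (kernel_zero (proj2 GM_ker))];
      rewrite zero_l; reflexivity.
  - apply ahom_eq2; c2; rewrite <- cmp_assoc, zero_r;
      [rewrite H2 | rewrite H4]; apply zero_r.
Qed.

Section Fz.
Variable F : SplitExt C X.
Definition FzA : ob C2 := arr_of (se_k F ∘ m).
Definition FzB : ob C2 := arr_of (from_z (pzero C) (se_B F)).

Lemma Fz_ksq : se_k F ∘ amap (arr_of m) = amap FzA ∘ idm (adom (arr_of m)).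
Proof. unfold FzA. nz. rewrite cmp_id_r. reflexivity. Qed.
Lemma Fz_asq : se_a F ∘ amap FzA = amap FzB ∘ to_z (pzero C) S.
Proof. unfold FzA, FzB. nz. rewrite cmp_assoc, (kernel_zero (se_ker F)), zero_l. reflexivity. Qed.
Lemma Fz_bsq : se_b F ∘ amap FzB = amap FzA ∘ from_z (pzero C) S.
Proof. apply from_z_eq. Qed.

Definition Fz_k : @hom C2 (arr_of m) FzA := @Build_ahom C (arr_of m) FzA (idm S) (se_k F) Fz_ksq.
Definition Fz_a : @hom C2 FzA FzB := @Build_ahom C FzA FzB (to_z (pzero C) S) (se_a F) Fz_asq.
Definition Fz_b : @hom C2 FzB FzA := @Build_ahom C FzB FzA (from_z (pzero C) S) (se_b F) Fz_bsq.

Lemma Fz_ab : Fz_a ∘ Fz_b = @idm C2 FzB.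
Proof. apply ahom_eq2; c2; [apply to_z_eq | apply se_ab]. Qed.

Lemma Fz_ker : is_kernel Fz_k Fz_a.
Proof.
  apply kernel2_of_components; c2; [| apply se_ker].
  split; [apply to_z_eq|]. intros q h _. exists h. split; [apply cmp_id_l|].
  intros u' Hu'. rewrite cmp_id_l in Hu'. exact Hu'.
Qed.

Definition Fz : SplitExt C2 (arr_of m) :=
  {| se_A := FzA; se_B := FzB; se_k := Fz_k; se_a := Fz_a; se_b := Fz_b;
     se_ab := Fz_ab; se_ker := Fz_ker |}.

Lemma Fz_to (f : hom (se_A F) A1) (w : hom (se_B F) B1) :
  se_morph_raw (se_k F) (se_a F) (se_b F) k1 a1 b1 (idm X) f w ->
  exists fA gB, is_se_morph Fz GM (idm _) fA gB /\ h1 gB = w.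
Proof.
  intros [Hk [Ha Hb]].
  assert (Hsq : f ∘ amap FzA = muG ∘ k0).
  { unfold FzA; nz. rewrite cmp_assoc, Hk, cmp_id_r. rw kG_sq. reflexivity. }
  assert (Hsq' : w ∘ amap FzB = q2 ∘ from_z (pzero C) B0) by apply from_z_eq.
  exists (@Build_ahom C FzA (se_A GM) k0 f Hsq), (@Build_ahom C FzB (se_B GM) (from_z (pzero C) B0) w Hsq').
  split; [|reflexivity].
  unfold is_se_morph, se_morph_raw; simpl. unfold FzA, FzB in *. split; [|split].
  - apply ahom_eq2; c2; [reflexivity | exact Hk].
  - apply ahom_eq2; c2; [| exact Ha]. rw (kernel_zero (proj1 GM_ker)). reflexivity.
  - apply ahom_eq2; c2; [apply from_z_eq | exact Hb].
Qed.

Lemma Fz_from fA gB : is_se_morph Fz GM (idm _) fA gB ->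
  se_morph_raw (se_k F) (se_a F) (se_b F) k1 a1 b1 (idm X) (h1 fA) (h1 gB).
Proof.
  intros [Hk [Ha Hb]].
  split; [|split]; [exact (f_equal h1 Hk) | exact (f_equal h1 Ha) | exact (f_equal h1 Hb)].
Qed.
End Fz.

Lemma cod_unique (F : SplitExt C X) f w f' w' :
  se_morph_raw (se_k F) (se_a F) (se_b F) k1 a1 b1 (idm X) f w ->
  se_morph_raw (se_k F) (se_a F) (se_b F) k1 a1 b1 (idm X) f' w' -> w = w'.
Proof.
  intros H H'.
  destruct (Fz_to F f w H) as [fA [gB [M1 <-]]].
  destruct (Fz_to F f' w' H') as [fA' [gB' [M2 <-]]].
  rewrite (base_unique _ _ _ _ _ M1 M2). reflexivity.
Qed.

Lemma cod_exists (F : SplitExt C X) : exists f w,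
  se_morph_raw (se_k F) (se_a F) (se_b F) k1 a1 b1 (idm X) f w.
Proof.
  destruct (HGM (Fz F)) as [fA [gB [M _]]].
  exists (h1 fA), (h1 gB). apply Fz_from. exact M.
Qed.

Lemma raw_comp {Xk A B A' B' A'' B'' : C} (k : hom Xk A) (a : hom A B) (b : hom B A)
  (k' : hom Xk A') (a' : hom A' B') (b' : hom B' A')
  (k'' : hom Xk A'') (a'' : hom A'' B'') (b'' : hom B'' A'') f g f' g' :
  se_morph_raw k a b k' a' b' (idm Xk) f g -> se_morph_raw k' a' b' k'' a'' b'' (idm Xk) f' g' ->
  se_morph_raw k a b k'' a'' b'' (idm Xk) (f' ∘ f) (g' ∘ g).
Proof.
  intros [H1 [H2 H3]] [H1' [H2' H3']]. split; [|split].
  - rewrite <- cmp_assoc, H1, cmp_id_r, H1'. reflexivity.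
  - rewrite cmp_assoc, H2', <- cmp_assoc, H2, cmp_assoc. reflexivity.
  - rewrite <- cmp_assoc, H3, cmp_assoc, H3', cmp_assoc. reflexivity.
Qed.

Lemma pb_kernel {K T P : C} (E : SplitExt C K) (g : hom T (se_B E)) (pa : hom P (se_A E))
  (ta : hom P T) (kP : hom K P) :
  is_pullback (se_a E) g pa ta -> pa ∘ kP = se_k E -> ta ∘ kP = zero K T -> is_kernel kP ta.
Proof.
  intros Hpb H1 H2. split; [exact H2|].
  intros q h Hh.
  assert (Ha : se_a E ∘ (pa ∘ h) = zero q (se_B E)).
  { destruct Hpb as [E0 _]. rewrite cmp_assoc, E0, <- cmp_assoc, Hh. apply zero_r. }
  destruct (kernel_factor (se_ker E) Ha) as [v Hv].
  exists v. split.
  - apply (pb_eq Hpb).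
    + rewrite cmp_assoc, H1, Hv. reflexivity.
    + rewrite cmp_assoc, H2, zero_l, Hh. reflexivity.
  - intros v' Hv'. apply (kernel_mono (se_ker E)).
    rewrite Hv, <- H1, <- cmp_assoc, Hv'. reflexivity.
Qed.

Lemma Epb (T : C) (g : hom T B0) : exists (PD : C) (pd : hom PD A1) (td : hom PD T)
  (kD : hom X PD) (sD : hom T PD),
  is_kernel kD td /\ td ∘ sD = idm T /\
  se_morph_raw kD td sD k1 a1 b1 (idm X) pd (q2 ∘ g) /\
  (forall r1 : hom PD X, r1 ∘ kD = idm X -> r1 ∘ sD = zero T X -> g = zero T B0).
Proof.
  destruct (HL _ _ _ a0 g) as [PA [pa [ta HA]]].
  destruct (HL _ _ _ a1 (q2 ∘ g)) as [PD [pd [td HD]]].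
  pose proof (proj1 HA) as HA0. pose proof (proj1 HD) as HD0.
  destruct (pb_lift HA (x := k0) (y := zero S T)) as [kA [HkA1 HkA2]].
  { rw (kernel_zero (proj1 GM_ker)). rewrite zero_r. reflexivity. }
  destruct (pb_lift HA (x := b0 ∘ g) (y := idm T)) as [sA [HsA1 HsA2]].
  { rewrite cmp_assoc, GM_ab0, cmp_id_l, cmp_id_r. reflexivity. }
  destruct (pb_lift HD (x := k1) (y := zero X T)) as [kD [HkD1 HkD2]].
  { rw (kernel_zero (proj2 GM_ker)). rewrite zero_r. reflexivity. }
  destruct (pb_lift HD (x := b1 ∘ (q2 ∘ g)) (y := idm T)) as [sD [HsD1 HsD2]].
  { rewrite cmp_assoc, GM_ab1, cmp_id_l, cmp_id_r. reflexivity. }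
  destruct (pb_lift HD (x := muG ∘ pa) (y := ta)) as [mu [Hmu1 Hmu2]].
  { rewrite cmp_assoc, aG_sq, <- cmp_assoc, HA0, !cmp_assoc. reflexivity. }
  assert (KA : is_kernel kA ta) by exact (pb_kernel E0 g pa ta kA HA HkA1 HkA2).
  assert (KD : is_kernel kD td) by exact (pb_kernel E1 (q2 ∘ g) pd td kD HD HkD1 HkD2).
  set (A2 := arr_of mu : ob C2). set (B2 := arr_of (idm T) : ob C2).
  assert (Hksq : kD ∘ amap (arr_of m) = amap A2 ∘ kA).
  { unfold A2; nz. apply (pb_eq HD).
    - rewrite !cmp_assoc, HkD1, Hmu1, <- cmp_assoc, HkA1. rw kG_sq. reflexivity.
    - rewrite !cmp_assoc, HkD2, Hmu2, HkA2, zero_l. reflexivity. }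
  assert (Hasq : td ∘ amap A2 = amap B2 ∘ ta).
  { unfold A2, B2; nz. rewrite Hmu2, cmp_id_l. reflexivity. }
  assert (Hbsq : sD ∘ amap B2 = amap A2 ∘ sA).
  { unfold A2, B2; nz. rewrite cmp_id_r. apply (pb_eq HD).
    - rewrite !cmp_assoc, HsD1, Hmu1, <- cmp_assoc, HsA1, !cmp_assoc. rw bG_sq. reflexivity.
    - rewrite !cmp_assoc, HsD2, Hmu2, HsA2. reflexivity. }
  set (kk := @Build_ahom C (arr_of m) A2 kA kD Hksq : @hom C2 (arr_of m) A2).
  set (aa := @Build_ahom C A2 B2 ta td Hasq : @hom C2 A2 B2).
  set (bb := @Build_ahom C B2 A2 sA sD Hbsq : @hom C2 B2 A2).
  assert (Hab : aa ∘ bb = @idm C2 B2).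
  { apply ahom_eq2; c2; [exact HsA2 | exact HsD2]. }
  assert (Hker : is_kernel kk aa).
  { apply kernel2_of_components; c2; assumption. }
  set (EG := {| se_A := A2; se_B := B2; se_k := kk; se_a := aa; se_b := bb;
                se_ab := Hab; se_ker := Hker |} : SplitExt C2 (arr_of m)).
  assert (Hmsq : pd ∘ amap A2 = muG ∘ pa) by (unfold A2; nz; exact Hmu1).
  assert (Hgsq : (q2 ∘ g) ∘ amap B2 = q2 ∘ g) by (unfold B2; nz; apply cmp_id_r).
  set (mid := @Build_ahom C A2 (se_A GM) pa pd Hmsq : @hom C2 A2 (se_A GM)).
  set (base := @Build_ahom C B2 (se_B GM) g (q2 ∘ g) Hgsq : @hom C2 B2 (se_B GM)).
  assert (Mor : is_se_morph EG GM (idm _) mid base).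
  { unfold is_se_morph, se_morph_raw; simpl. split; [|split].
    - apply ahom_eq2; c2; rewrite cmp_id_r; assumption.
    - apply ahom_eq2; c2; [exact HA0 | exact HD0].
    - apply ahom_eq2; c2; assumption. }
  exists PD, pd, td, kD, sD. split; [exact KD|]. split; [exact HsD2|]. split.
  { split; [|split]; [rewrite cmp_id_r; exact HkD1 | exact HD0 | exact HsD1]. }
  intros r1 Hr1 Hr2. nz.
  assert (Hab0 : ta ∘ sA = idm T) by exact HsA2.
  set (EA := {| se_A := PA; se_B := T; se_k := kA; se_a := ta; se_b := sA;
                se_ab := Hab0; se_ker := KA |} : SplitExt C S).
  assert (Hmk : mu ∘ kA = kD ∘ m) by (symmetry; exact Hksq).
  assert (Hms : mu ∘ sA = sD).
  { pose proof Hbsq as H. unfold A2, B2 in H; nz. rewrite cmp_id_r in H. symmetry; exact H. }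
  assert (Hpz : pi ∘ (r1 ∘ mu) = zero PA Y).
  { apply (jointly_epic HP HL _ EA); simpl.
    - nz. rewrite <- !cmp_assoc, Hmk, (cmp_assoc r1 kD m), Hr1, cmp_id_l, zero_l. exact (kernel_zero Hm).
    - nz. rewrite <- !cmp_assoc, Hms, Hr2, zero_l, zero_r. reflexivity. }
  destruct (kernel_factor Hm Hpz) as [r0 Hr0].
  assert (Hr0k : r0 ∘ kA = idm S).
  { apply m_mono. rewrite cmp_assoc, Hr0, <- cmp_assoc, Hmk, cmp_assoc, Hr1, cmp_id_l, cmp_id_r.
    reflexivity. }
  assert (Hr0s : r0 ∘ sA = zero T S).
  { apply m_mono. rewrite cmp_assoc, Hr0, <- cmp_assoc, Hms, Hr2, !zero_r. reflexivity. }
  destruct (triv_morph EG r0 r1 Hr0k Hr0s Hr1 Hr2 Hr0) as [fA MorZ].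
  pose proof (base_unique _ _ _ _ _ Mor MorZ) as Hb.
  exact (f_equal h0 Hb).
Qed.

Lemma q2_mono : is_mono q2.
Proof.
  apply (mono_of_trivial_kernel HP HL). intros T g Hg.
  destruct (Epb T g) as [PD [pd [td [kD [sD [KD [Hts [[Hk [Ha Hb]] Cl]]]]]]]].
  assert (Hz0 : a1 ∘ pd = zero PD B1) by (rewrite Ha, Hg, !zero_l; reflexivity).
  destruct (kernel_factor (proj2 GM_ker) Hz0) as [r1 Hr1].
  apply (Cl r1).
  - apply k1_mono. nz. rewrite cmp_assoc, Hr1, Hk. reflexivity.
  - apply k1_mono. nz. rewrite cmp_assoc, Hr1, Hb, Hg, !zero_r. reflexivity.
Qed.

Lemma pb_sym {a b c p : C} {f : hom a c} {g : hom b c} {pa : hom p a} {pb : hom p b} :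
  is_pullback f g pa pb -> is_pullback g f pb pa.
Proof.
  intros [E H]. split; [symmetry; exact E|].
  intros q qa qb Hq. destruct (H q qb qa (eq_sym Hq)) as [u [[H1 H2] U]].
  exists u. split; [split; assumption|]. intros u' H1' H2'. apply U; assumption.
Qed.

Lemma conj_lemma (f : hom A0 (se_A GS)) (q1 : hom B0 (se_B GS)) :
  se_morph_raw k0 a0 b0 (se_k GS) (se_a GS) (se_b GS) (idm S) f q1 ->
  exists (c0 : hom X B0) (P : C) (p1 p2 : hom P X) (kX dX : hom X P) (hX : hom P A1),
    is_product p1 p2 /\ p1 ∘ kX = zero X X /\ p2 ∘ kX = idm X /\
    p1 ∘ dX = idm X /\ p2 ∘ dX = idm X /\ is_kernel kX p1 /\
    se_morph_raw kX p1 dX k1 a1 b1 (idm X) hX (q2 ∘ c0) /\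
    (forall (W : C) (w : hom W X), (q1 ∘ c0) ∘ w = zero W (se_B GS) -> w = zero W X).
Proof.
  intros Hf.
  destruct (has_products HL X X) as [P [p1 [p2 HPr]]].
  destruct (HL _ _ _ pi pi) as [R [r1 [r2 HR]]].
  pose proof (proj1 HR) as HR0.
  destruct (pb_lift HR (x := zero S X) (y := m)) as [kR [HkR1 HkR2]].
  { rewrite zero_r, (kernel_zero Hm). reflexivity. }
  destruct (pb_lift HR (x := idm X) (y := idm X)) as [dR [HdR1 HdR2]].
  { reflexivity. }
  destruct (prod_pair (zero X X) (idm X) HPr) as [kX [HkX1 HkX2]].
  destruct (prod_pair (idm X) (idm X) HPr) as [dX [HdX1 HdX2]].
  destruct (prod_pair r1 r2 HPr) as [j [Hj1 Hj2]].
  assert (KR : is_kernel kR r1).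
  { split; [exact HkR1|]. intros q h Hh.
    assert (H1 : pi ∘ (r2 ∘ h) = zero q Y).
    { rewrite cmp_assoc, <- HR0, <- cmp_assoc, Hh. apply zero_r. }
    destruct (kernel_factor Hm H1) as [v Hv]. exists v. split.
    - apply (pb_eq HR).
      + rewrite cmp_assoc, HkR1, zero_l, Hh. reflexivity.
      + rewrite cmp_assoc, HkR2, Hv. reflexivity.
    - intros v' Hv'. apply m_mono. rewrite Hv, <- HkR2, <- cmp_assoc, Hv'. reflexivity. }
  assert (KX : is_kernel kX p1).
  { split; [exact HkX1|]. intros q h Hh. exists (p2 ∘ h). split.
    - apply (prod_eq HPr).
      + rewrite cmp_assoc, HkX1, zero_l, Hh. reflexivity.
      + rewrite cmp_assoc, HkX2, cmp_id_l. reflexivity.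
    - intros v' Hv'. rewrite <- Hv', cmp_assoc, HkX2, cmp_id_l. reflexivity. }
  set (A2 := arr_of j : ob C2). set (B2 := arr_of (idm X) : ob C2).
  assert (Hksq : kX ∘ amap (arr_of m) = amap A2 ∘ kR).
  { unfold A2; nz. apply (prod_eq HPr).
    - rewrite !cmp_assoc, HkX1, Hj1, HkR1, zero_l. reflexivity.
    - rewrite !cmp_assoc, HkX2, Hj2, HkR2, cmp_id_l. reflexivity. }
  assert (Hasq : p1 ∘ amap A2 = amap B2 ∘ r1).
  { unfold A2, B2; nz. rewrite Hj1, cmp_id_l. reflexivity. }
  assert (Hbsq : dX ∘ amap B2 = amap A2 ∘ dR).
  { unfold A2, B2; nz. rewrite cmp_id_r. apply (prod_eq HPr).
    - rewrite !cmp_assoc, HdX1, Hj1, HdR1. reflexivity.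
    - rewrite !cmp_assoc, HdX2, Hj2, HdR2. reflexivity. }
  set (kk := @Build_ahom C (arr_of m) A2 kR kX Hksq : @hom C2 (arr_of m) A2).
  set (aa := @Build_ahom C A2 B2 r1 p1 Hasq : @hom C2 A2 B2).
  set (bb := @Build_ahom C B2 A2 dR dX Hbsq : @hom C2 B2 A2).
  assert (Hab : aa ∘ bb = @idm C2 B2).
  { apply ahom_eq2; c2; [exact HdR1 | exact HdX1]. }
  assert (Hker : is_kernel kk aa).
  { apply kernel2_of_components; c2; assumption. }
  set (EC := {| se_A := A2; se_B := B2; se_k := kk; se_a := aa; se_b := bb;
                se_ab := Hab; se_ker := Hker |} : SplitExt C2 (arr_of m)).
  destruct (HGM EC) as [cA [cB [[Mk [Ma Mb]] _]]].
  pose proof (hsq2 _ _ cB) as Hc0'.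
  pose proof (f_equal h0 Mk) as Mk0. pose proof (f_equal h0 Ma) as Ma0. pose proof (f_equal h0 Mb) as Mb0.
  pose proof (f_equal h1 Mk) as Mk1. pose proof (f_equal h1 Ma) as Ma1. pose proof (f_equal h1 Mb) as Mb1.
  clear Mk Ma Mb.
  unfold EC, kk, aa, bb, A2, B2 in *.
  cbn [se_A se_B se_k se_a se_b h0 h1 acmp aid adom acod amap arr_of] in *.
  rewrite cmp_id_r in Hc0'.
  set (c0 := h0 cB).
  exists c0, P, p1, p2, kX, dX, (h1 cA).
  split; [exact HPr|]. split; [exact HkX1|]. split; [exact HkX2|].
  split; [exact HdX1|]. split; [exact HdX2|]. split; [exact KX|].
  split.
  { assert (Hr : se_morph_raw kX p1 dX k1 a1 b1 (idm X) (h1 cA) (h1 cB)) by (split; [|split]; assumption).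
    rewrite Hc0' in Hr. exact Hr. }
  intros W w Hw.
  destruct (HL _ _ _ r1 w) as [Pw [e1 [e2 HW]]].
  pose proof (proj1 HW) as HW0.
  destruct (pb_lift HW (x := kR) (y := zero S W)) as [kW [HkW1 HkW2]].
  { rewrite HkR1, zero_r. reflexivity. }
  destruct (pb_lift HW (x := dR ∘ w) (y := idm W)) as [sW [HsW1 HsW2]].
  { rewrite cmp_assoc, HdR1, cmp_id_l, cmp_id_r. reflexivity. }
  set (ER := {| se_A := R; se_B := X; se_k := kR; se_a := r1; se_b := dR;
                se_ab := HdR1; se_ker := KR |} : SplitExt C S).
  assert (KW : is_kernel kW e2) by exact (pb_kernel ER w e1 e2 kW HW HkW1 HkW2).
  assert (Mw : se_morph_raw kW e2 sW kR r1 dR (idm S) e1 w).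
  { split; [|split]; [rewrite cmp_id_r; exact HkW1 | exact HW0 | exact HsW1]. }
  assert (Mc : se_morph_raw kR r1 dR k0 a0 b0 (idm S) (h0 cA) c0).
  { split; [|split]; assumption. }
  pose proof (raw_comp _ _ _ _ _ _ _ _ _ _ _ _ _ (raw_comp _ _ _ _ _ _ _ _ _ _ _ _ _ Mw Mc) Hf)
    as [Fk [Fa Fb]].
  assert (Fz0 : se_a GS ∘ (f ∘ (h0 cA ∘ e1)) = zero Pw (se_B GS)).
  { nz. rewrite Fa, (cmp_assoc q1 c0 w), Hw, zero_l. reflexivity. }
  destruct (kernel_factor (se_ker GS) Fz0) as [rho Hrho].
  assert (Hrk : rho ∘ kW = idm S).
  { apply (kernel_mono (se_ker GS)). nz. rewrite cmp_assoc, Hrho, Fk. reflexivity. }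
  assert (Hrs : rho ∘ sW = zero W S).
  { apply (kernel_mono (se_ker GS)). nz. rewrite cmp_assoc, Hrho, Fb, (cmp_assoc q1 c0 w), Hw, !zero_r.
    reflexivity. }
  destruct (has_products HL S W) as [Pr [pr1 [pr2 HPr2]]].
  destruct (prod_pair (idm S) (zero S W) HPr2) as [i1 [Hi11 Hi12]].
  destruct (prod_pair (zero W S) (idm W) HPr2) as [i2 [Hi21 Hi22]].
  assert (KP : is_kernel i1 pr2).
  { split; [exact Hi12|]. intros q h Hh. exists (pr1 ∘ h). split.
    - apply (prod_eq HPr2).
      + rewrite cmp_assoc, Hi11, cmp_id_l. reflexivity.
      + rewrite cmp_assoc, Hi12, zero_l, Hh. reflexivity.
    - intros v' Hv'. rewrite <- Hv', cmp_assoc, Hi11, cmp_id_l. reflexivity. }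
  set (EW := {| se_A := Pw; se_B := W; se_k := kW; se_a := e2; se_b := sW;
                se_ab := HsW2; se_ker := KW |} : SplitExt C S).
  set (EP := {| se_A := Pr; se_B := W; se_k := i1; se_a := pr2; se_b := i2;
                se_ab := Hi22; se_ker := KP |} : SplitExt C S).
  destruct (prod_pair rho e2 HPr2) as [th [Hth1 Hth2]].
  assert (Hthk : th ∘ kW = i1).
  { apply (prod_eq HPr2); rewrite cmp_assoc; [rewrite Hth1, Hrk, Hi11 | rewrite Hth2, HkW2, Hi12];
    reflexivity. }
  assert (Hths : th ∘ sW = i2).
  { apply (prod_eq HPr2); rewrite cmp_assoc; [rewrite Hth1, Hrs, Hi21 | rewrite Hth2, HsW2, Hi22];
    reflexivity. }
  assert (Hiso : is_iso th).
  { apply (HP S S EW EP (idm S) th (idm W)).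
    - unfold is_se_morph, se_morph_raw; simpl. rewrite !cmp_id_r, cmp_id_l. auto.
    - apply iso_id.
    - apply iso_id. }
  destruct Hiso as [psi [Hpsi1 Hpsi2]].
  apply (Hz W w).
  exists Pr, pr1, pr2, i1, i2, (r2 ∘ (e1 ∘ psi)).
  split; [exact HPr2|]. split; [exact Hi11|]. split; [exact Hi12|].
  split; [exact Hi21|]. split; [exact Hi22|]. split.
  - rewrite <- Hthk, <- !cmp_assoc, (cmp_assoc psi th kW), Hpsi1, cmp_id_l, HkW1, HkR2. reflexivity.
  - rewrite <- Hths, <- !cmp_assoc, (cmp_assoc psi th sW), Hpsi1, cmp_id_l, HsW1, cmp_assoc, HdR2, cmp_id_l.
    reflexivity.
Qed.

Lemma q1_mono_core (f : hom A0 (se_A GS)) (q1 : hom B0 (se_B GS)) :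
  se_morph_raw k0 a0 b0 (se_k GS) (se_a GS) (se_b GS) (idm S) f q1 -> is_mono q1.
Proof.
  intros Hf.
  destruct (conj_lemma f q1 Hf) as [c0 [P [p1 [p2 [kX [dX [hX [HPr [HkX1 [HkX2 [HdX1 [HdX2 [KX [MX Hc]]]]]]]]]]]]]].
  assert (cmono : is_mono (q1 ∘ c0)).
  { apply (mono_of_trivial_kernel HP HL). intros W w Hw. exact (Hc W w Hw). }
  set (EX := {| se_A := P; se_B := X; se_k := kX; se_a := p1; se_b := dX;
                se_ab := HdX1; se_ker := KX |} : SplitExt C X).
  apply (mono_of_trivial_kernel HP HL). intros T g Hg.
  destruct (Epb T g) as [PD [pd [td [kD [sD [KD [Hts [MD Cl]]]]]]]].
  set (ED := {| se_A := PD; se_B := T; se_k := kD; se_a := td; se_b := sD;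
                se_ab := Hts; se_ker := KD |} : SplitExt C X).
  destruct (HL _ _ _ td td) as [SD [u1 [u2 HS]]].
  destruct (pb_lift HS (x := zero X PD) (y := kD)) as [kS [HkS1 HkS2]].
  { rewrite zero_r, (kernel_zero KD). reflexivity. }
  destruct (pb_lift HS (x := idm PD) (y := idm PD)) as [dS [HdS1 HdS2]].
  { reflexivity. }
  assert (KS : is_kernel kS u1) by exact (pb_kernel ED td u2 u1 kS (pb_sym HS) HkS2 HkS1).
  set (ES := {| se_A := SD; se_B := PD; se_k := kS; se_a := u1; se_b := dS;
                se_ab := HdS1; se_ker := KS |} : SplitExt C X).
  destruct (cod_exists ES) as [fS [d1 MS]].
  destruct (pb_lift HS (x := kD ∘ p1) (y := kD ∘ p2)) as [j1 [Hj11 Hj12]].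
  { rewrite !cmp_assoc, (kernel_zero KD), !zero_l. reflexivity. }
  assert (MXS : se_morph_raw kX p1 dX kS u1 dS (idm X) j1 kD).
  { split; [|split].
    - rewrite cmp_id_r. apply (pb_eq HS).
      + rewrite cmp_assoc, Hj11, <- cmp_assoc, HkX1, zero_r, HkS1. reflexivity.
      + rewrite cmp_assoc, Hj12, <- cmp_assoc, HkX2, cmp_id_r, HkS2. reflexivity.
    - exact Hj11.
    - apply (pb_eq HS).
      + rewrite !cmp_assoc, Hj11, HdS1, <- cmp_assoc, HdX1, cmp_id_r, cmp_id_l. reflexivity.
      + rewrite !cmp_assoc, Hj12, HdS2, <- cmp_assoc, HdX2, cmp_id_r, cmp_id_l. reflexivity. }
  pose proof (cod_unique EX _ _ _ _ (raw_comp _ _ _ _ _ _ _ _ _ _ _ _ _ MXS MS) MX) as Hd1k.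
  destruct (pb_lift HS (x := sD ∘ td) (y := idm PD)) as [j2 [Hj21 Hj22]].
  { rewrite cmp_assoc, Hts, cmp_id_l, cmp_id_r. reflexivity. }
  assert (MDS : se_morph_raw kD td sD kS u1 dS (idm X) j2 sD).
  { split; [|split].
    - rewrite cmp_id_r. apply (pb_eq HS).
      + rewrite cmp_assoc, Hj21, <- cmp_assoc, (kernel_zero KD), zero_r, HkS1. reflexivity.
      + rewrite cmp_assoc, Hj22, cmp_id_l, HkS2. reflexivity.
    - exact Hj21.
    - apply (pb_eq HS).
      + rewrite !cmp_assoc, Hj21, HdS1, <- cmp_assoc, Hts, cmp_id_r, cmp_id_l. reflexivity.
      + rewrite !cmp_assoc, Hj22, HdS2, !cmp_id_l. reflexivity. }
  pose proof (cod_unique ED _ _ _ _ (raw_comp _ _ _ _ _ _ _ _ _ _ _ _ _ MDS MS) MD) as Hd1s.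
  cbn [se_k se_a se_b se_A se_B] in Hd1k, Hd1s.
  (* the action of D on X lands in B0 *)
  destruct (HL _ _ _ q2 d1) as [PP [v1 [v2 HPP]]].
  pose proof (proj1 HPP) as HPP0.
  assert (v2m : is_mono v2).
  { intros c x y Hxy. apply (pb_eq HPP); [| exact Hxy]. apply q2_mono.
    rewrite !cmp_assoc, HPP0, <- !cmp_assoc, Hxy. reflexivity. }
  destruct (pb_lift HPP (x := c0) (y := kD)) as [l1 [Hl11 Hl12]].
  { symmetry; exact Hd1k. }
  destruct (pb_lift HPP (x := g) (y := sD)) as [l2 [Hl21 Hl22]].
  { symmetry; exact Hd1s. }
  destruct (mono_factor_iso HP _ ED _ v2 l1 l2 v2m Hl12 Hl22) as [vi [Hvi1 Hvi2]].
  unfold ED in *; cbn [se_A se_B se_k se_a se_b] in *.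
  assert (Hdk : (v1 ∘ vi) ∘ kD = c0).
  { rewrite <- Hl12, <- cmp_assoc, (cmp_assoc vi v2 l1), Hvi1, cmp_id_l. exact Hl11. }
  assert (Hds : (v1 ∘ vi) ∘ sD = g).
  { rewrite <- Hl22, <- cmp_assoc, (cmp_assoc vi v2 l2), Hvi1, cmp_id_l. exact Hl21. }
  destruct (HL _ _ _ (q1 ∘ c0) (q1 ∘ (v1 ∘ vi))) as [PQ [w1 [w2 HQ]]].
  pose proof (proj1 HQ) as HQ0.
  assert (w2m : is_mono w2).
  { intros c x y Hxy. apply (pb_eq HQ); [| exact Hxy]. apply cmono.
    rewrite !cmp_assoc, HQ0, <- !cmp_assoc, Hxy. reflexivity. }
  destruct (pb_lift HQ (x := idm X) (y := kD)) as [n1 [Hn11 Hn12]].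
  { rewrite cmp_id_r, <- cmp_assoc, Hdk. reflexivity. }
  destruct (pb_lift HQ (x := zero T X) (y := sD)) as [n2 [Hn21 Hn22]].
  { rewrite zero_r, <- cmp_assoc, Hds, Hg. reflexivity. }
  destruct (mono_factor_iso HP _ ED _ w2 n1 n2 w2m Hn12 Hn22) as [wi [Hwi1 Hwi2]].
  unfold ED in *; cbn [se_A se_B se_k se_a se_b] in *.
  apply (Cl (w1 ∘ wi)).
  - rewrite <- Hn12, <- cmp_assoc, (cmp_assoc wi w2 n1), Hwi1, cmp_id_l. exact Hn11.
  - rewrite <- Hn22, <- cmp_assoc, (cmp_assoc wi w2 n2), Hwi1, cmp_id_l. exact Hn21.
Qed.

End Main.

Theorem proposition3p7 (C : PCat) (Hlim : has_finite_limits C)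
  (Hproto : is_protomodular C) (S X : C) (m : hom S X)
  (Hnormal : is_normal_mono m)
  (GS : SplitExt C S) (HGS : is_generic GS)
  (GM : SplitExt (ArrowPCat C) (arr_of m)) (HGM : is_generic GM) :
  trivial_centralizer m ->
  exists (f : hom (adom (se_A GM)) (se_A GS)) (q1 : hom (adom (se_B GM)) (se_B GS)),
    se_morph_raw (h0 (se_k GM)) (h0 (se_a GM)) (h0 (se_b GM))
                 (se_k GS) (se_a GS) (se_b GS) (idm S) f q1 /\
    (forall f' q1',
       se_morph_raw (h0 (se_k GM)) (h0 (se_a GM)) (h0 (se_b GM))
                    (se_k GS) (se_a GS) (se_b GS) (idm S) f' q1' ->
       f' = f /\ q1' = q1) /\
    is_mono q1.
Proof.
  intros [Zc [cz [[_ Hcent] Hzz]]].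
  assert (Hz : forall (W : C) (w : hom W X), commute m w -> w = zero W X).
  { intros W w Hw. destruct (Hcent W w Hw) as [u [Hu _]].
    rewrite <- Hu, <- (cmp_id_l u), Hzz, zero_l, zero_r. reflexivity. }
  destruct Hnormal as [Y [pi Hm]].
  destruct Hlim as [_ HL].
  destruct (HGS (E0 m GM)) as [f [q1 [Hf Hu]]].
  exists f, q1. split; [exact Hf|]. split; [exact Hu|].
  eapply q1_mono_core; eauto.
Qed.
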